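(* In the reduction instance $NTP([a_j]_{j\in A},W)$, every feasible schedule $S$ satisfies $B(S)=\sum_{k\in A}b_{i_k}$, i.e. all potential bumps are caused by critical employees.
   Context: Reduction instance. Let $N\ge1$, $A=\{1,\dots,N\}$, positive integers $a_1,\dots,a_N$, positive integer $W\le\sum_{j\in A}a_j$. Set $M=N+\sum_{j\in A}a_j+1$, employees $\mathcal E=\{1,\dots,M\}$ (smaller index = more senior). For $k\in A$: $i_k=k+\sum_{j=1}^{k-1}a_j$ (critical employees), $\mathcal E^S_k=\{i: i_k<i\le i_k+a_k\}$ (stable block), $\mathcal E^S=\bigcup_k\mathcal E^S_k$. Response delays: $r_{i_k}=\sum_{j=1}^{k}a_j$; for $i\in\mathcal E^S_k$, $r_i=\sum_{j=1}^{k-1}a_j$; $r_M=\sum_{j\in A}a_j$. Let $C^*_0=2\sum_j a_j$ and $H=C^*_0-W$. A schedule $S=(s_i,e_i)_{i\in\mathcal E}$ has $s_i\ge0$, $e_i=s_i+r_i$; it is feasible if $s_1\le\dots\le s_M$ and $e_i\le H$ for all $i$. $b_i=|\{j: i<j,\ e_j<e_i\}|$, $B(S)=\sum_i b_i$. *)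

(* Defs.v *)
From HB Require Import structures.
From mathcomp Require Import all_boot all_order all_algebra.
Set Implicit Arguments. Unset Strict Implicit. Unset Printing Implicit Defensive.
Import Order.TTheory GRing.Theory Num.Theory.

(* A = {1..N}; a : nat -> nat, only a 1 .. a N are relevant. *)

Definition psum (a : nat -> nat) (k : nat) : nat := \sum_(1 <= j < k.+1) a j.

Definition nEmp (N : nat) (a : nat -> nat) : nat := N + psum a N + 1.

Definition crit (a : nat -> nat) (k : nat) : nat := k + psum a k.-1.

Definition in_stable (a : nat -> nat) (k i : nat) : bool :=
  (crit a k < i) && (i <= crit a k + a k).

(* response delay r_i (the critical employees, stable blocks and M are
   pairwise disjoint and cover {1..M}, so exactly one term is active) *)
Definition delay (N : nat) (a : nat -> nat) (i : nat) : nat :=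
  \sum_(1 <= k < N.+1)
     (if i == crit a k then psum a k
      else if in_stable a k i then psum a k.-1 else 0)
  + (if i == nEmp N a then psum a N else 0).

Definition horizon (N : nat) (a : nat -> nat) (W : nat) : nat :=
  2 * psum a N - W.

Section Sched.
Variable R : realDomainType.
Local Open Scope ring_scope.

Definition endt (N : nat) (a : nat -> nat) (s : nat -> R) (i : nat) : R :=
  s i + (delay N a i)%:R.

Definition feasible (N : nat) (a : nat -> nat) (W : nat) (s : nat -> R) : Prop :=
  [/\ (forall i, (1 <= i <= nEmp N a)%N -> 0 <= s i),
      (forall i, (1 <= i < nEmp N a)%N -> s i <= s i.+1)
    & (forall i, (1 <= i <= nEmp N a)%N -> endt N a s i <= (horizon N a W)%:R)].

Definition bumps (N : nat) (a : nat -> nat) (s : nat -> R) (i : nat) : nat :=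
  count (fun j => endt N a s j < endt N a s i) (iota i.+1 (nEmp N a - i)).

Definition totbumps (N : nat) (a : nat -> nat) (s : nat -> R) : nat :=
  \sum_(1 <= i < (nEmp N a).+1) bumps N a s i.
End Sched.

(* Main.v *)
Require Import Defs.
From mathcomp Require Import all_boot all_order all_algebra.
From mathcomp Require Import zify.
Import Order.TTheory GRing.Theory Num.Theory.
Set Implicit Arguments. Unset Strict Implicit.

Lemma psumS a k : psum a k.+1 = psum a k + a k.+1.
Proof. by rewrite /psum big_nat_recr. Qed.

Lemma psum_mono a k1 k2 : (k1 <= k2)%N -> (psum a k1 <= psum a k2)%N.
Proof.
move=> h; rewrite -(subnKC h); elim: (k2 - k1) => [|d IH]; first by rewrite addn0.
by rewrite addnS psumS; apply: leq_trans IH (leq_addr _ _).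
Qed.

Lemma critS a k : (1 <= k)%N -> crit a k.+1 = crit a k + a k + 1.
Proof.
case: k => // k _; rewrite /crit /= psumS; lia.
Qed.

Lemma crit_lt a k1 k2 : (1 <= k1)%N -> (k1 < k2)%N -> (crit a k1 + a k1 < crit a k2)%N.
Proof.
move=> h1 h2.
have e := critS a h1.
have : (crit a k1.+1 <= crit a k2)%N.
  rewrite /crit /=; have := psum_mono a (k1:=k1) (k2:=k2.-1); lia.
lia.
Qed.

Lemma crit1 a : crit a 1 = 1%N.
Proof. by rewrite /crit /psum big_geq. Qed.

Lemma nEmp_crit N a : nEmp N a = crit a N.+1.
Proof. rewrite /nEmp /crit /=; lia. Qed.

Lemma delay_block N a m j : (1 <= m <= N)%N ->
  (crit a m <= j <= crit a m + a m)%N ->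
  delay N a j = if j == crit a m then psum a m else psum a m.-1.
Proof.
move=> /andP[hm1 hmN] /andP[hj1 hj2].
rewrite /delay.
have hM : (j == nEmp N a) = false.
  apply/negbTE/eqP; rewrite nEmp_crit.
  have hmN1 : (m < N.+1)%N by lia.
  have := crit_lt a hm1 hmN1; lia.
rewrite hM addn0.
have hmN1 : (m < N.+1)%N by lia.
rewrite (@big_cat_nat _ _ _ m) //=; last lia.
rewrite (@big_ltn _ _ _ m N.+1 _ hmN1).
rewrite (big_nat_cond) big1; last first.
  move=> k /andP[/andP[hk1 hk2] _].
  have := crit_lt a hk1 hk2 => hc.
  have -> : (j == crit a k) = false by apply/negbTE/eqP; lia.
  have -> : in_stable a k j = false by rewrite /in_stable; apply/negbTE; lia.
  by [].
rewrite (big_nat_cond) big1; last first.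
  move=> k /andP[/andP[hk1 hk2] _].
  have := crit_lt a hm1 (hk1 : (m < k)%N) => hc.
  have -> : (j == crit a k) = false by apply/negbTE/eqP; lia.
  have -> : in_stable a k j = false by rewrite /in_stable; apply/negbTE; lia.
  by [].
rewrite add0n addn0.
case: eqP => // hne.
by have -> : in_stable a m j by rewrite /in_stable; apply/andP; split => //; lia.
Qed.

Lemma delay_last N a : delay N a (nEmp N a) = psum a N.
Proof.
rewrite /delay eqxx (big_nat_cond) big1 ?add0n //.
move=> k /andP[/andP[hk1 hk2] _].
have := crit_lt a hk1 (hk2 : (k < N.+1)%N); rewrite -nEmp_crit => hc.
have -> : (nEmp N a == crit a k) = false by apply/negbTE/eqP; lia.
have -> : in_stable a k (nEmp N a) = false by rewrite /in_stable; apply/negbTE; lia.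
by [].
Qed.

Lemma block_exists N a j : (1 <= j < crit a N.+1)%N ->
  exists m, (1 <= m <= N)%N /\ (crit a m <= j <= crit a m + a m)%N.
Proof.
elim: N => [|N IH] /andP[hj1 hj2].
  by move: hj2; rewrite crit1; lia.
case: (ltnP j (crit a N.+1)) => h.
  have [m [hm hmj]] := IH (introT andP (conj hj1 h)).
  exists m; split => //; lia.
exists N.+1; split; first lia.
move: hj2; rewrite critS //; lia.
Qed.

Section Main.
Variable R : realDomainType.
Local Open Scope ring_scope.

Lemma s_mono N a W (s : nat -> R) i j : feasible N a W s ->
  (1 <= i)%N -> (i <= j)%N -> (j <= nEmp N a)%N -> s i <= s j.
Proof.
move=> [_ hmono _] hi hij hj.
move: hj; rewrite -(subnKC hij).
elim: (j - i)%N => [|d IH] hd; first by rewrite addn0.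
apply: le_trans (IH _) _; first lia.
rewrite addnS; apply: hmono; lia.
Qed.

Lemma stable_zero N a W (s : nat -> R) k i : feasible N a W s ->
  (1 <= k <= N)%N -> (crit a k < i <= crit a k + a k)%N -> bumps N a s i = 0%N.
Proof.
move=> hf hk hi.
have hdi : delay N a i = psum a k.-1.
  rewrite (delay_block hk); last lia.
  by have -> : (i == crit a k) = false by apply/negbTE/eqP; lia.
have hiM : (i < nEmp N a)%N.
  rewrite nEmp_crit; move/andP: hk => [hk1 hkN].
  have := crit_lt a hk1 (hkN : (k < N.+1)%N); lia.
apply/eqP; rewrite eqn0Ngt -has_count; apply/hasPn => j; rewrite mem_iota => hj.
rewrite -leNgt /endt.
apply: lerD.
  apply: (s_mono hf); lia.
rewrite ler_nat hdi.
have hjM : (j <= nEmp N a)%N by lia.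
case: (ltnP j (nEmp N a)) => hj2; last first.
  have -> : j = nEmp N a by lia.
  rewrite delay_last; apply: psum_mono; lia.
have hjr : (1 <= j < crit a N.+1)%N by rewrite -nEmp_crit; lia.
have [m [hm hmj]] := block_exists hjr.
rewrite (delay_block hm hmj).
have hkm : (k <= m)%N.
  case: (leqP k m) => // hmk.
  have hm1 : (1 <= m)%N by lia.
  have := crit_lt a hm1 hmk; lia.
case: eqP => _; apply: psum_mono; lia.
Qed.

End Main.

Theorem corollary3 (R : realDomainType) (N : nat) (a : nat -> nat) (W : nat)
    (s : nat -> R) :
  (1 <= N)%N ->
  (forall j, (1 <= j <= N)%N -> (0 < a j)%N) ->
  (0 < W)%N -> (W <= psum a N)%N ->
  feasible N a W s ->
  totbumps N a s = (\sum_(1 <= k < N.+1) bumps N a s (crit a k))%N.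
Proof.
move=> hN _ _ _ hf.
have claim : forall k, (k <= N)%N ->
  (\sum_(1 <= i < k + psum a k + 1) bumps N a s i =
   \sum_(1 <= j < k.+1) bumps N a s (crit a j))%N.
  elim => [|k IH] hk.
    by rewrite /psum !big_geq.
  have ec : crit a k.+1 = (k + psum a k + 1)%N by rewrite /crit /=; lia.
  have IH' := IH (ltnW hk).
  rewrite [RHS]big_nat_recr //= -IH'.
  rewrite psumS (@big_cat_nat _ _ _ (k + psum a k + 1)) //=; [|lia|lia].
  congr (_ + _)%N.
  have hlt : (k + psum a k + 1 < k.+1 + (psum a k + a k.+1) + 1)%N by lia.
  rewrite (@big_ltn _ _ _ _ _ _ hlt).
  rewrite ec -[X in _ = X]addn0; congr (_ + _)%N.
  rewrite big_nat_cond big1 // => i /andP[/andP[hi1 hi2] _].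
  apply: (stable_zero (W:=W) (k:=k.+1) hf); lia.
rewrite /totbumps big_nat_recr //=.
have -> : bumps N a s (nEmp N a) = 0%N by rewrite /bumps subnn.
rewrite addn0 /nEmp; exact: claim.
rewrite /nEmp; lia.
Qed.
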